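(* Let $A=\mathbb{C}[x,y,z]$, let $s,t\in A\setminus\{0\}$ be coprime and equip $A$ with the Poisson bracket $\{x,y\}=t s_z-s t_z$, $\{y,z\}=t s_x-s t_x$, $\{z,x\}=t s_y-s t_y$. Let $p=(\alpha,\beta,\gamma)\in\mathbb{C}^3$ and $M=\langle x-\alpha,y-\beta,z-\gamma\rangle$. Then $M$ is a Poisson ideal if and only if either (1) $p$ is a common zero of $s$ and $t$, or (2) $p$ is a singular point of $f_{\lambda,\mu}:=\lambda s-\mu t$ for some $(\lambda,\mu)\in\mathbb{P}^1(\mathbb{C})$.
   Context: Subscripts denote partial derivatives. $p$ is a singular point of $f$ means $f(p)=f_x(p)=f_y(p)=f_z(p)=0$. An ideal $I$ is Poisson if $\{a,I\}\subseteq I$ for all $a\in A$. *)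

(* Defs.v *)
From HB Require Import structures.
From mathcomp Require Import all_boot all_order all_algebra.
From mathcomp Require Import reals complex.
From mathcomp Require Import mpoly.
Set Implicit Arguments. Unset Strict Implicit. Unset Printing Implicit Defensive.
Import Order.TTheory GRing.Theory Num.Theory.
Local Open Scope ring_scope.

Definition CC (R : realType) := complex R.

Section Defs.
Variable (F : comRingType).
Local Notation A := {mpoly F[3]}.

Definition vx : 'I_3 := ord0.
Definition vy : 'I_3 := inord 1.
Definition vz : 'I_3 := inord 2.

Definition dx (a : A) : A := a^`M(vx).
Definition dy (a : A) : A := a^`M(vy).
Definition dz (a : A) : A := a^`M(vz).

(* The Poisson bracket on A with {x,y} = t s_z - s t_z, {y,z} = t s_x - s t_x,
   {z,x} = t s_y - s t_y, extended to A as a biderivation. *)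
Definition pbr (s t : A) (a b : A) : A :=
  (dx a * dy b - dy a * dx b) * (t * dz s - s * dz t)
+ (dy a * dz b - dz a * dy b) * (t * dx s - s * dx t)
+ (dz a * dx b - dx a * dz b) * (t * dy s - s * dy t).

Definition mdivides (d a : A) : Prop := exists q : A, a = q * d.
Definition mcoprime (s t : A) : Prop :=
  forall d : A, mdivides d s -> mdivides d t -> exists c : F, c != 0 /\ d = c%:MP.

Definition pt (al be ga : F) : 'I_3 -> F := fun i => [:: al; be; ga]`_i.
Definition in_max_ideal (al be ga : F) (m : A) : Prop :=
  exists c1 c2 c3 : A,
    m = c1 * ('X_vx - al%:MP) + c2 * ('X_vy - be%:MP) + c3 * ('X_vz - ga%:MP).

Definition poisson_ideal (br : A -> A -> A) (I : A -> Prop) : Prop :=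
  forall a m, I m -> I (br a m).

Definition singular_point (f : A) (p : 'I_3 -> F) : Prop :=
  f.@[p] = 0 /\ (dx f).@[p] = 0 /\ (dy f).@[p] = 0 /\ (dz f).@[p] = 0.
End Defs.

(* Main.v *)
Require Import Defs.
From HB Require Import structures.
From mathcomp Require Import all_boot all_order all_algebra.
From mathcomp Require Import mpoly.
From mathcomp Require Import ring.
Import Order.TTheory GRing.Theory Num.Theory.
Local Open Scope ring_scope.
From mathcomp Require Import reals complex.

Section S.
Variable F : fieldType.
Local Notation A := {mpoly F[3]}.
Variables al be ga : F.
Local Notation M := (in_max_ideal al be ga).
Local Notation p := (pt al be ga).

Lemma ptx : p vx = al. Proof. by []. Qed.
Lemma pty : p vy = be. Proof. by rewrite /pt /vy inordK. Qed.
Lemma ptz : p vz = ga. Proof. by rewrite /pt /vz inordK. Qed.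

Lemma M0 : M 0.
Proof. by exists 0, 0, 0; rewrite !mul0r !addr0. Qed.
Lemma MD a b : M a -> M b -> M (a + b).
Proof.
move=> [a1 [a2 [a3 ->]]] [b1 [b2 [b3 ->]]].
exists (a1 + b1), (a2 + b2), (a3 + b3); ring.
Qed.
Lemma MM c a : M a -> M (c * a).
Proof.
move=> [a1 [a2 [a3 ->]]]; exists (c * a1), (c * a2), (c * a3).
by rewrite !mulrDr !mulrA.
Qed.
Lemma MN a : M a -> M (- a).
Proof. by move=> h; rewrite -mulN1r; apply: MM. Qed.

Lemma Meval m : M m -> m.@[p] = 0.
Proof.
move=> [a1 [a2 [a3 ->]]].
rewrite !mevalD !mevalM !mevalB !mevalXU !mevalC ptx pty ptz !subrr !mulr0.
by rewrite !addr0.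
Qed.

Definition P (f : A) := M (f - (f.@[p])%:MP).

Lemma PD f g : P f -> P g -> P (f + g).
Proof.
rewrite /P mevalD mpolyCD => hf hg.
have -> : f + g - ((f.@[p])%:MP + (g.@[p])%:MP) = (f - (f.@[p])%:MP) + (g - (g.@[p])%:MP).
  by ring.
exact: MD.
Qed.

Lemma PM f g : P f -> P g -> P (f * g).
Proof.
rewrite /P mevalM mpolyCM => hf hg.
have -> : f * g - (f.@[p])%:MP * (g.@[p])%:MP = g * (f - (f.@[p])%:MP) + (f.@[p])%:MP * (g - (g.@[p])%:MP).
  by ring.
by apply: MD; apply: MM.
Qed.

Lemma PC c : P c%:MP.
Proof. by rewrite /P mevalC subrr; apply: M0. Qed.

Lemma PX i : P 'X_i.
Proof.
rewrite /P mevalXU.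
have : i = vx \/ i = vy \/ i = vz.
  case: i => [[|[|[|k]]] Hk]; [left|right;left|right;right|by []]; apply: val_inj => //=.
    by rewrite inordK. by rewrite inordK.
case=> [->|[->|->]]; rewrite ?ptx ?pty ?ptz.
- by exists 1, 0, 0; rewrite mul1r !mul0r !addr0.
- by exists 0, 1, 0; rewrite mul1r !mul0r add0r addr0.
- by exists 0, 0, 1; rewrite mul1r !mul0r !add0r.
Qed.

Lemma Pall f : P f.
Proof.
rewrite [f]mpolyE; elim: (msupp f) => [|m s IH]; first by rewrite big_nil; apply: PC.
rewrite big_cons; apply: PD => //.
rewrite -mul_mpolyC; apply: PM; first exact: PC.
rewrite mpolyXE_id; elim/big_ind: _ => //; first exact: (PC 1).
  exact: PM.
move=> i _; elim: (m i) => [|k IHk]; first by rewrite expr0; exact: (PC 1).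
by rewrite exprS; apply: PM => //; apply: PX.
Qed.

Lemma Mvanish f : f.@[p] = 0 -> M f.
Proof. by move=> h; have := Pall f; rewrite /P h subr0. Qed.

Lemma dXU i j : ('X_j : A)^`M(i) = (j == i)%:R.
Proof.
rewrite mderivX mnm1E; case: eqP => [->|_]; last by rewrite scale0r.
have -> : (U_(i) - U_(i))%MM = 0%MM by apply/mnmP => k; rewrite mnmBE mnm0E subnn.
by rewrite mpolyX0 scale1r.
Qed.

Lemma nxy : (vx == vy) = false. Proof. by apply/eqP => /(congr1 val); rewrite /= inordK. Qed.
Lemma nyx : (vy == vx) = false. Proof. by rewrite eq_sym nxy. Qed.
Lemma nxz : (vx == vz) = false. Proof. by apply/eqP => /(congr1 val); rewrite /= inordK. Qed.
Lemma nzx : (vz == vx) = false. Proof. by rewrite eq_sym nxz. Qed.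
Lemma nyz : (vy == vz) = false. Proof. by apply/eqP => /(congr1 val); rewrite /= !inordK. Qed.
Lemma nzy : (vz == vy) = false. Proof. by rewrite eq_sym nyz. Qed.

Variables s t : A.
Let W1 := t * dz s - s * dz t.
Let W2 := t * dx s - s * dx t.
Let W3 := t * dy s - s * dy t.

Lemma back : W1.@[p] = 0 -> W2.@[p] = 0 -> W3.@[p] = 0 ->
  poisson_ideal (pbr s t) M.
Proof.
move=> h1 h2 h3 a m _; rewrite /pbr.
by apply: MD; [apply: MD|]; apply: MM; apply: Mvanish.
Qed.

Lemma forw : poisson_ideal (pbr s t) M ->
  [/\ W1.@[p] = 0, W2.@[p] = 0 & W3.@[p] = 0].
Proof.
move=> H; split.
- have hm : M ('X_vy - be%:MP) by exists 0, 1, 0; rewrite mul1r !mul0r add0r addr0.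
  have := Meval _ (H 'X_vx _ hm).
  rewrite /pbr /dx /dy /dz !mderivB !mderivC !dXU ?eqxx ?nxy ?nyx ?nxz ?nzx ?nyz ?nzy /=.
  by move=> <-; congr meval; rewrite /W1; ring.
- have hm : M ('X_vz - ga%:MP) by exists 0, 0, 1; rewrite mul1r !mul0r !add0r.
  have := Meval _ (H 'X_vy _ hm).
  rewrite /pbr /dx /dy /dz !mderivB !mderivC !dXU ?eqxx ?nxy ?nyx ?nxz ?nzx ?nyz ?nzy /=.
  by move=> <-; congr meval; rewrite /W2; ring.
- have hm : M ('X_vx - al%:MP) by exists 1, 0, 0; rewrite mul1r !mul0r !addr0.
  have := Meval _ (H 'X_vz _ hm).
  rewrite /pbr /dx /dy /dz !mderivB !mderivC !dXU ?eqxx ?nxy ?nyx ?nxz ?nzx ?nyz ?nzy /=.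
  by move=> <-; congr meval; rewrite /W3; ring.
Qed.

Lemma main :
  (poisson_ideal (pbr s t) M <->
   ((s.@[p] = 0 /\ t.@[p] = 0) \/
    (exists la mu : F, (la != 0 \/ mu != 0) /\
       singular_point (la *: s - mu *: t) p))).
Proof.
have E1 : W1.@[p] = t.@[p] * (dz s).@[p] - s.@[p] * (dz t).@[p] by rewrite mevalB !mevalM.
have E2 : W2.@[p] = t.@[p] * (dx s).@[p] - s.@[p] * (dx t).@[p] by rewrite mevalB !mevalM.
have E3 : W3.@[p] = t.@[p] * (dy s).@[p] - s.@[p] * (dy t).@[p] by rewrite mevalB !mevalM.
have Ef : forall (la mu : F) (g : A -> A), (forall q, g q = q^`M(vx)) \/ (forall q, g q = q^`M(vy)) \/ (forall q, g q = q^`M(vz)) ->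
   (g (la *: s - mu *: t)).@[p] = la * (g s).@[p] - mu * (g t).@[p].
  move=> la mu g [h|[h|h]]; by rewrite !h mderivB !mderivZ mevalB !mevalZ.
have Edx := fun la mu => Ef la mu (@dx F) (or_introl (fun q => erefl)).
have Edy := fun la mu => Ef la mu (@dy F) (or_intror (or_introl (fun q => erefl))).
have Edz := fun la mu => Ef la mu (@dz F) (or_intror (or_intror (fun q => erefl))).
rewrite /singular_point.
set s0 := s.@[p] in E1 E2 E3 *; set t0 := t.@[p] in E1 E2 E3 *.
split.
- move/forw=> [h1 h2 h3].
  have [/andP[/eqP e0 /eqP e1]|nz] := boolP ((s0 == 0) && (t0 == 0)).
    by left; split.
  right; exists t0, s0; split.
    by move: nz; rewrite negb_and => /orP [] ?; [right|left].
  rewrite Edx Edy Edz mevalB !mevalZ -/s0 -/t0 -E1 -E2 -E3.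
  by split; [rewrite mulrC subrr|].
- case=> [[h1 h2]|[la [mu [hn [f0 [fx [fy fz]]]]]]].
    by apply: back; rewrite ?E1 ?E2 ?E3 h1 h2 !mul0r subrr.
  move: f0 fx fy fz; rewrite Edx Edy Edz mevalB !mevalZ -/s0 -/t0.
  move=> /eqP; rewrite subr_eq0 => /eqP f0.
  move=> /eqP; rewrite subr_eq0 => /eqP fx.
  move=> /eqP; rewrite subr_eq0 => /eqP fy.
  move=> /eqP; rewrite subr_eq0 => /eqP fz.
  have key : forall a b : F, la * a = mu * b -> t0 * a - s0 * b = 0.
    move=> a b hab; case: hn => hn.
      suff h : la * (la * (t0 * a - s0 * b)) = 0 by move/eqP: h; rewrite !mulf_eq0 (negbTE hn) /= => /eqP.
      have -> : la * (la * (t0 * a - s0 * b)) = (la * t0) * (la * a) - (la * s0) * (la * b) by ring.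
      by rewrite hab f0; ring.
    suff h : mu * (mu * (t0 * a - s0 * b)) = 0 by move/eqP: h; rewrite !mulf_eq0 (negbTE hn) /= => /eqP.
    have -> : mu * (mu * (t0 * a - s0 * b)) = (mu * t0) * (mu * a) - (mu * s0) * (mu * b) by ring.
    by rewrite -hab -f0; ring.
  by apply: back; rewrite ?E1 ?E2 ?E3; apply: key.
Qed.
End S.

Theorem lemma3p5 (R : realType) (s t : {mpoly CC R[3]}) (al be ga : CC R) :
  s != 0 -> t != 0 -> mcoprime s t ->
  (poisson_ideal (pbr s t) (in_max_ideal al be ga) <->
   ((s.@[pt al be ga] = 0 /\ t.@[pt al be ga] = 0) \/
    (exists la mu : CC R, (la != 0 \/ mu != 0) /\
       singular_point (la *: s - mu *: t) (pt al be ga)))).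
Proof. by move=> _ _ _; apply: main. Qed.
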